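(* Let $\mathcal{G}=(\mathcal{V},\mathcal{E})$ be a directed graph with terminals $s,t$, $f:2^{\mathcal{E}}\to\mathbb{R}_+$ normalized, monotone nondecreasing and submodular, and $C^*$ an $(s,t)$-cut minimizing $f$. Consider the deterministic greedy heuristic: start with $C=\emptyset$, $y=0\in\{0,1\}^{\mathcal{E}}$; while the shortest $(s,t)$-path $P_{\min}$ with respect to edge lengths $y$ has $\sum_{e\in P_{\min}}y(e)<1$, add to $C$ an edge of $P_{\min}$ with minimum marginal cost $f(e\mid C)$ and set its $y$-value to $1$; let $\widehat C_d$ be the returned solution. Then $f(\widehat C_d)\le |\widehat C_d|\,f(C^* )$, and this approximation factor cannot be improved in general.
   Context: An $(s,t)$-cut is a set of edges whose removal disconnects all $s$-$t$ paths. $f(e\mid C)=f(C\cup\{e\})-f(C)$. *)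

(* Defs.v *)
From HB Require Import structures.
From mathcomp Require Import all_boot all_order all_algebra.
Set Implicit Arguments. Unset Strict Implicit. Unset Printing Implicit Defensive.
Import Order.TTheory GRing.Theory Num.Theory.
Local Open Scope ring_scope.

Section Graph.
Variables (V E : finType) (src tgt : E -> V).

Fixpoint is_walk (x t : V) (p : seq E) : bool :=
  match p with
  | [::] => x == t
  | e :: p' => (src e == x) && is_walk (tgt e) t p'
  end.

Definition st_path (s t : V) (p : seq E) : bool :=
  is_walk s t p && uniq (s :: map tgt p).

Definition is_cut (s t : V) (C : {set E}) : Prop :=
  forall p, st_path s t p -> has (fun e => e \in C) p.

Variable R : realFieldType.

Definition normalized (f : {set E} -> R) := f set0 = 0.
Definition nonneg_fun (f : {set E} -> R) := forall A, 0 <= f A.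
Definition monotone_fun (f : {set E} -> R) :=
  forall A B : {set E}, A \subset B -> f A <= f B.
Definition submodular (f : {set E} -> R) :=
  forall A B : {set E}, f (A :|: B) + f (A :&: B) <= f A + f B.

Definition marg (f : {set E} -> R) (e : E) (C : {set E}) : R :=
  f (e |: C) - f C.

(* edge lengths y = indicator of C, and the y-length of a path *)
Definition ylen (C : {set E}) (p : seq E) : R :=
  \sum_(e <- p) (if e \in C then 1 else 0).

Definition shortest_path (s t : V) (C : {set E}) (P : seq E) : Prop :=
  st_path s t P /\ forall Q, st_path s t Q -> ylen C P <= ylen C Q.

(* One iteration of the greedy loop with current solution C adds edge e:
   some shortest path P_min (w.r.t. y = 1_C) has length < 1, e lies on
   P_min and has minimum marginal cost among the edges of P_min. *)
Definition greedy_step (f : {set E} -> R) (s t : V) (C : {set E}) (e : E) : Prop :=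
  exists P, [/\ shortest_path s t C P, ylen C P < 1, e \in P &
            forall e', e' \in P -> marg f e C <= marg f e' C].

Definition greedy_stop (s t : V) (C : {set E}) : Prop :=
  ~ exists P, shortest_path s t C P /\ ylen C P < 1.

(* es = sequence of edges added by a complete run of the heuristic
   (any tie-breaking); the returned solution is [set e in es]. *)
Definition greedy_run (f : {set E} -> R) (s t : V) (es : seq E) : Prop :=
  (forall i, (i < size es)%N ->
     forall e0, greedy_step f s t [set x in take i es] (nth e0 es i)) /\
  greedy_stop s t [set x in es].

End Graph.

(* Main.v *)
Require Import Defs.
From HB Require Import structures.
From mathcomp Require Import all_boot all_order all_algebra.
Import Order.TTheory GRing.Theory Num.Theory.
Local Open Scope ring_scope.

Section Part1.
Variables (R : realFieldType) (V E : finType) (src tgt : E -> V) (s t : V)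
  (f : {set E} -> R) (Cstar : {set E}).

Lemma marg_le_step C e :
  nonneg_fun f -> monotone_fun f -> submodular f ->
  is_cut src tgt s t Cstar -> greedy_step src tgt f s t C e ->
  marg f e C <= f Cstar.
Proof.
move=> hnn hmon hsub hcut [P [[hP _] _ eP hmin]].
have /hasP [e' e'P e'C] := hcut _ hP.
apply: (le_trans (hmin _ e'P)); rewrite /marg.
have h1 := hsub [set e'] C.
have h2 := hnn ([set e'] :&: C).
have h3 : f [set e'] <= f Cstar by apply: hmon; rewrite sub1set.
rewrite lerBlDr; apply: (@le_trans _ _ (f [set e'] + f C)); last by rewrite lerD2r.
by apply: le_trans h1; rewrite lerDl.
Qed.

Lemma set_rcons (q : seq E) x :
  [set y in rcons q x] = x |: [set y in q].
Proof. by apply/setP => y; rewrite !inE mem_rcons in_cons. Qed.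

Lemma part1 (es : seq E) :
  nonneg_fun f -> normalized f -> monotone_fun f -> submodular f ->
  is_cut src tgt s t Cstar ->
  greedy_run src tgt f s t es ->
  f [set x in es] <= #|[set x in es]|%:R * f Cstar.
Proof.
move=> hnn hnorm hmon hsub hcut [hstep _].
have hs0 : 0 <= f Cstar by apply: hnn.
suff H : forall i, (i <= size es)%N ->
  f [set x in take i es] <= #|[set x in take i es]|%:R * f Cstar.
  by have := H _ (leqnn _); rewrite take_size.
elim=> [|i IH] hi.
  have -> : [set x in take 0 es] = set0 by apply/setP => x; rewrite take0 !inE.
  by rewrite cards0 hnorm mul0r.
have hi' : (i < size es)%N by [].
case: es hstep hi hi' IH => [//|e0 es'] hstep hi hi' IH.
rewrite (take_nth e0 hi') set_rcons.
set C := [set x in take i (e0 :: es')].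
set e := nth e0 (e0 :: es') i.
have IH' := IH (ltnW hi').
case: (boolP (e \in C)) => heC.
  have -> : e |: C = C by apply/setP => y; rewrite in_setU1; case: eqP => // ->.
  exact: IH'.
have hm := marg_le_step C e hnn hmon hsub hcut (hstep i hi' e0).
rewrite cardsU1 heC /= -add1n natrD mulrDl mul1r.
have -> : f (e |: C) = marg f e C + f C by rewrite /marg subrK.
exact: lerD.
Qed.
End Part1.

Section Tight.
Variable n : nat.
Definition TV := 'I_3.
Definition TE := option 'I_n.
Definition vs : TV := @Ordinal 3 0 isT.
Definition vm : TV := @Ordinal 3 1 isT.
Definition vt : TV := @Ordinal 3 2 isT.
Definition tsrc (e : TE) : TV := if e is Some _ then vs else vm.
Definition ttgt (e : TE) : TV := if e is Some _ then vm else vt.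

Lemma walk_None p : is_walk tsrc ttgt vs vt p -> None \in p.
Proof.
case: p => [//|[i|] [|[j|] p]] //=; by rewrite !in_cons ?eqxx ?orbT.
Qed.

Lemma path2 i : st_path tsrc ttgt vs vt [:: Some i; None].
Proof. by []. Qed.
End Tight.

Lemma ylen_ge0 (R : realFieldType) (E : finType) (C : {set E}) p :
  0 <= ylen R C p.
Proof. by apply: sumr_ge0 => e _; case: ifP. Qed.

Lemma uniq_nth_notin_take (T : eqType) (x0 : T) s i :
  uniq s -> (i < size s)%N -> nth x0 s i \notin take i s.
Proof.
move=> hu hi; have hu' := hu.
rewrite -(cat_take_drop i s) (drop_nth x0 hi) in hu'.
move: hu'; rewrite cat_uniq => /and3P [_ /hasPn H _].
apply/negP => hin; have := H (nth x0 s i); rewrite in_cons eqxx /=.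
by move/(_ isT); rewrite hin.
Qed.

Theorem lemma8 (R : realFieldType) :
  (* approximation guarantee *)
  (forall (V E : finType) (src tgt : E -> V) (s t : V) (f : {set E} -> R)
          (Cstar : {set E}) (es : seq E),
     nonneg_fun f -> normalized f -> monotone_fun f -> submodular f ->
     is_cut src tgt s t Cstar ->
     (forall C, is_cut src tgt s t C -> f Cstar <= f C) ->
     greedy_run src tgt f s t es ->
     f [set x in es] <= #|[set x in es]|%:R * f Cstar)
  /\
  (* tightness: for every n >= 1 some instance and run attain the bound *)
  (forall n : nat, (0 < n)%N ->
     exists (V E : finType) (src tgt : E -> V) (s t : V) (f : {set E} -> R)
            (Cstar : {set E}) (es : seq E),
       [/\ nonneg_fun f, normalized f, monotone_fun f & submodular f] /\
       [/\ is_cut src tgt s t Cstar,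
           (forall C, is_cut src tgt s t C -> f Cstar <= f C) &
           greedy_run src tgt f s t es] /\
       [/\ #|[set x in es]| = n, 0 < f Cstar &
           f [set x in es] = #|[set x in es]|%:R * f Cstar]).
Proof.
split.
  move=> V E src tgt s t f Cstar es h1 h2 h3 h4 h5 _ h6.
  exact: (@part1 R V E src tgt s t f Cstar es h1 h2 h3 h4 h5 h6).
move=> n n0.
pose f := fun S : {set TE n} => (#|S|%:R : R).
pose es := [seq Some i | i <- enum 'I_n].
have hu : uniq es by rewrite map_inj_uniq ?enum_uniq //; move=> a b [].
have hsz : size es = n by rewrite size_map size_enum_ord.
have hNone : None \notin es by apply/mapP => -[].
have hSome : forall i, Some i \in es by move=> i; apply/mapP; exists i; rewrite ?mem_enum.
exists (TV : finType), (TE n : finType), (@tsrc n), (@ttgt n), vs, vt, f,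
  [set None], es.
split.
  split.
  - by move=> A; rewrite /f ler0n.
  - by rewrite /normalized /f cards0.
  - by move=> A B hAB; rewrite /f ler_nat subset_leq_card.
  - by move=> A B; rewrite /f -!natrD cardsUI.
split.
  split.
  - move=> p /andP [hw _]; apply/hasP; exists None; first exact: walk_None hw.
    by rewrite inE.
  - move=> C hC; rewrite /f cards1 ler1n card_gt0.
    have /hasP [e _ eC] := hC _ (@path2 n (Ordinal n0)).
    by apply/set0Pn; exists e.
  split.
  - move=> i hi e0.
    have hi' := hi.
    set e := nth e0 es i.
    have he : e \notin [set x in take i es].
      by rewrite inE; apply: uniq_nth_notin_take.
    have heS : exists j, e = Some j.
      have : e \in es by apply: mem_nth.
      by case: (e) => [j|] h; [exists j | rewrite h in hNone].
    case: heS => j ej.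
    have hN : None \notin [set x in take i es].
      by rewrite inE; apply: contra hNone; apply: mem_take.
    have hy0 : ylen R [set x in take i es] [:: Some j; None] = 0.
      by rewrite /ylen !big_cons big_nil -ej (negbTE he) (negbTE hN) !addr0.
    exists [:: Some j; None]; split.
    + split; first exact: (@path2 n j).
      by move=> Q _; rewrite hy0; apply: ylen_ge0.
    + by rewrite hy0 ltr01.
    + by rewrite ej mem_head.
    + move=> e'; rewrite !inE => /orP [/eqP -> | /eqP ->];
        rewrite /marg /f !cardsU1 -?ej he ?hN //.
  - move=> [P [[/andP [hw _] _] hlt]].
    case: P hw hlt => [//|e p] /= /andP [he _].
    have hin : e \in [set x in es].
      case: e he => [j|] //= _; by rewrite inE.
    rewrite /ylen big_cons hin.
    have := ylen_ge0 R _ [set x in es] p; rewrite /ylen => hp.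
    by rewrite -[X in _ < X](addr0 1) ltrD2l ltNge hp.
split.
- by rewrite cardsE; move/card_uniqP: hu => ->.
- by rewrite /f cards1 ltr01.
- by rewrite /f cards1 mulr1.
Qed.
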